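(* Let $R$ be a finite rod set not equivalent to the empty rod set, and let $a$ be a positive integer. There exist a finite rod set $Q$ and a rod set $S$ of shape $\langle a\rangle$ with $R\xrightarrow{Q}S$ if and only if $$F(a-i,R)=0\ \text{ for } i=1,2,\dots,\max R-1\quad\text{and}\quad F(a,R)\neq0.$$ In that case $C(a,S)=F(a,R)$.
   Context: A rod is a triple $(r,c,\varepsilon)$ with $r$ a positive integer (length), $c$ a tag (color), $\varepsilon\in\{\pm1\}$ (sign); antirods have sign $-1$. A rod set is a set of rods with finitely many of each length. $C(n,R)$ = (number of positive rods of length $n$) $-$ (number of antirods of length $n$); $R\equiv S$ means $C(n,R)=C(n,S)$ for all $n>0$; each class has a unique reduced member (no rod and antirod of the same length). $R$ is finite if its reduced equivalent is finite; $\max R$ is the largest length in it. The shape of $S$ is the set of lengths $n$ with $C(n,S)\ne0$; ''$S$ has shape $\langle a\rangle$'' means this set is $\{a\}$. A train built from $R$ is a finite sequence of rods of $R$ (including the empty train), with length the sum of lengths and sign the product of signs; $F(n,R)$ is the number of positive minus negative trains of length $n$, with $F(0,R)=1$, $F(n,R)=0$ for $n<0$. Unions are disjoint unions; $\overline{Q}$ reverses all signs; $QR$ has one rod per pair $(q,r)\in Q\times R$ of length $\operatorname{len}q+\operatorname{len}r$ and sign $\operatorname{sign}q\operatorname{sign}r$. $R\xrightarrow{Q}S$ means $S\equiv R\cup\overline{Q}\cup QR$. *)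

(* Defs.v *)
From mathcomp Require Import all_boot all_order all_algebra.
Set Implicit Arguments. Unset Strict Implicit. Unset Printing Implicit Defensive.
Import Order.TTheory GRing.Theory Num.Theory.

(* A rod set, up to renaming of colours: for every length n > 0, the number
   [npos R n] of positive rods and the number [nneg R n] of antirods of
   length n (finitely many of each length).  The rods of R are the triples
   (n, c, +1) with c < npos R n and (n, c, -1) with c < nneg R n, n > 0.
   Values at length 0 are irrelevant (rods have positive length) and are
   ignored by every definition below. *)
Record rodset := RodSet { npos : nat -> nat ; nneg : nat -> nat }.

Definition rod_empty : rodset := RodSet (fun _ => 0%N) (fun _ => 0%N).

Definition Ccount (R : rodset) (n : nat) : int := (npos R n)%:Z - (nneg R n)%:Z.

Definition rod_equiv (R S : rodset) : Prop :=
  forall n, (0 < n)%N -> Ccount R n = Ccount S n.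

Definition rod_union (R S : rodset) : rodset :=
  RodSet (fun n => npos R n + npos S n)%N (fun n => nneg R n + nneg S n)%N.

Definition rod_bar (Q : rodset) : rodset := RodSet (nneg Q) (npos Q).

(* QR : one rod per pair (q,r), length len q + len r, sign sign q * sign r *)
Definition rod_prod (Q R : rodset) : rodset :=
  RodSet
    (fun n => \sum_(1 <= k < n) (npos Q k * npos R (n - k) + nneg Q k * nneg R (n - k)))%N
    (fun n => \sum_(1 <= k < n) (npos Q k * nneg R (n - k) + nneg Q k * npos R (n - k)))%N.

(* R is finite: its reduced equivalent is finite, i.e. C(n,R) = 0 for all
   large n. *)
Definition rod_finite (R : rodset) : Prop :=
  exists N : nat, forall n, (N < n)%N -> Ccount R n = 0.

(* m = max R : the largest length occurring in the reduced equivalent of R. *)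
Definition is_max_len (R : rodset) (m : nat) : Prop :=
  (0 < m)%N /\ Ccount R m != 0 /\ forall n, (m < n)%N -> Ccount R n = 0.

Definition has_shape1 (S : rodset) (a : nat) : Prop :=
  forall n, (0 < n)%N -> (Ccount S n != 0 <-> n = a).

(* Counting trains (finite sequences of rods of R) of total length n,
   separately by sign: decomposing a nonempty train into its first rod (of
   length l, 1 <= l <= n) followed by a train of length n - l.  [fuel] only
   ensures termination; the result is meaningful for n <= fuel.
   Output: (number of positive trains, number of negative trains). *)
Fixpoint trainsPN (R : rodset) (fuel n : nat) : nat * nat :=
  match fuel with
  | 0 => if n == 0 then (1, 0)%N else (0, 0)%N
  | f.+1 =>
      if n == 0 then (1, 0)%N else
      ((\sum_(1 <= l < n.+1)
          (npos R l * (trainsPN R f (n - l)).1 + nneg R l * (trainsPN R f (n - l)).2))%N,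
       (\sum_(1 <= l < n.+1)
          (npos R l * (trainsPN R f (n - l)).2 + nneg R l * (trainsPN R f (n - l)).1))%N)
  end.

(* F(n,R) for integer n: positive minus negative trains of length n;
   F(0,R) = 1 and F(n,R) = 0 for n < 0. *)
Definition Ftrains (R : rodset) (n : int) : int :=
  match n with
  | Posz k => ((trainsPN R k k).1)%:Z - ((trainsPN R k k).2)%:Z
  | Negz _ => 0
  end.

Definition rod_arrow (R Q S : rodset) : Prop :=
  rod_equiv S (rod_union (rod_union R (rod_bar Q)) (rod_prod Q R)).

(* Main.v *)
Require Import Defs.
From mathcomp Require Import all_boot all_order all_algebra.
From mathcomp Require Import zify ring.
Import Order.TTheory GRing.Theory Num.Theory.
Local Open Scope ring_scope.

Lemma PoszSum lo hi (F : nat -> nat) :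
  ((\sum_(lo <= k < hi) F k)%N)%:Z = \sum_(lo <= k < hi) (F k)%:Z.
Proof. by rewrite -[LHS]intz sumMz; apply: eq_bigr => i _; rewrite intz. Qed.

Lemma sum_diff lo hi (a b c d : nat -> nat) :
  ((\sum_(lo <= k < hi) (a k * c k + b k * d k))%N)%:Z
  - ((\sum_(lo <= k < hi) (a k * d k + b k * c k))%N)%:Z
  = \sum_(lo <= k < hi) ((a k)%:Z - (b k)%:Z) * ((c k)%:Z - (d k)%:Z).
Proof.
rewrite !PoszSum -sumrB; apply: eq_bigr => k _.
rewrite !PoszD !PoszM; ring.
Qed.

Lemma Ccount_prod Q R n :
  Ccount (rod_prod Q R) n = \sum_(1 <= k < n) Ccount Q k * Ccount R (n - k).
Proof. by rewrite /Ccount /= sum_diff. Qed.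

Lemma Ccount_union Q R n : Ccount (rod_union Q R) n = Ccount Q n + Ccount R n.
Proof. rewrite /Ccount /= !PoszD; ring. Qed.

Lemma Ccount_bar Q n : Ccount (rod_bar Q) n = - Ccount Q n.
Proof. rewrite /Ccount /=; ring. Qed.

Lemma trainsPN_S R f n : trainsPN R f.+1 n =
  if n == 0 then (1, 0)%N else
      ((\sum_(1 <= l < n.+1)
          (npos R l * (trainsPN R f (n - l)).1 + nneg R l * (trainsPN R f (n - l)).2))%N,
       (\sum_(1 <= l < n.+1)
          (npos R l * (trainsPN R f (n - l)).2 + nneg R l * (trainsPN R f (n - l)).1))%N).
Proof. by []. Qed.

Lemma fuelS R f n : (n <= f)%N -> trainsPN R f.+1 n = trainsPN R f n.
Proof.
elim: f n => [|f IH] n hn.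
  by have -> : n = 0%N by lia.
case: n hn => [|n] hn; first by [].
rewrite [trainsPN R f.+2 _]trainsPN_S [trainsPN R f.+1 n.+1]trainsPN_S.
have -> : (n.+1 == 0)%N = false by [].
congr pair; apply: eq_big_nat => l /andP[h1 h2]; rewrite IH //; lia.
Qed.

Lemma fuel_ge R f n : (n <= f)%N -> trainsPN R f n = trainsPN R n n.
Proof.
elim: f => [|f IH] hn; first by have -> : n = 0%N by lia.
have [->|hne] := eqVneq n f.+1; first by [].
rewrite fuelS; last by lia.
apply: IH; lia.
Qed.

Definition ff R (n : nat) : int := Ftrains R n%:Z.

Lemma ff0 R : ff R 0 = 1.
Proof. by []. Qed.

Lemma F_rec R n : (0 < n)%N ->
  ff R n = \sum_(1 <= k < n.+1) Ccount R k * ff R (n - k).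
Proof.
case: n => [//|n] _.
rewrite /ff /Ftrains /=. rewrite sum_diff.
apply: eq_big_nat => l /andP[h1 h2].
rewrite /Ccount; rewrite fuel_ge //; lia.
Qed.

Lemma sum_single lo hi j (F : nat -> int) : (lo <= j < hi)%N ->
  (forall k, (lo <= k < hi)%N -> k != j -> F k = 0) ->
  \sum_(lo <= k < hi) F k = F j.
Proof.
move=> /andP[h1 h2] H.
rewrite (@big_cat_nat _ _ _ j) //=; last exact: ltnW.
rewrite [X in _ + X]big_ltn //.
rewrite big_nat_cond big1 ?add0r; last first.
  move=> k /andP[/andP[k1 k2] _]; apply: H; lia.
rewrite big_nat_cond big1 ?addr0 //.
move=> k /andP[/andP[k1 k2] _]; apply: H; lia.
Qed.

Lemma exists_last (g : nat -> int) N : g 0%N != 0 ->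
  (forall n, (N < n)%N -> g n = 0) ->
  exists d, g d != 0 /\ forall n, (d < n)%N -> g n = 0.
Proof.
elim: N => [|N IH] g0 H; first by exists 0%N.
have [h|h] := eqVneq (g N.+1) 0.
  apply: IH => // n hn; have [->|] := eqVneq n N.+1; first by [].
  move=> ?; apply: H; lia.
by exists N.+1.
Qed.

Definition gq (q : nat -> int) (n : nat) : int := if n == 0%N then 1 else q n.

Lemma conv_split R (q : nat -> int) n : (0 < n)%N ->
  \sum_(1 <= k < n.+1) Ccount R k * gq q (n - k)
  = Ccount R n + \sum_(1 <= k < n) q k * Ccount R (n - k).
Proof.
move=> hn.
rewrite big_nat_recr /=; last by lia.
rewrite subnn /gq /= mulr1 addrC; congr (_ + _).
rewrite big_nat_rev /=; apply: eq_big_nat => k /andP[h1 h2].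
have -> : (1 + n - k.+1 = n - k)%N by lia.
have -> : (n - (n - k) = k)%N by lia.
have -> : (k == 0)%N = false by lia.
by rewrite mulrC.
Qed.

Lemma arrowE R Q S n : rod_arrow R Q S -> (0 < n)%N ->
  gq (Ccount Q) n - \sum_(1 <= k < n.+1) Ccount R k * gq (Ccount Q) (n - k)
  = - Ccount S n.
Proof.
move=> HA hn; rewrite conv_split // HA //.
rewrite !Ccount_union Ccount_bar Ccount_prod /gq.
have -> : (n == 0)%N = false by lia.
ring.
Qed.

Lemma forward R Q S a m : (0 < a)%N -> is_max_len R m -> rod_finite Q ->
  has_shape1 S a -> rod_arrow R Q S ->
  (m <= a)%N /\ (forall n, (a - m < n < a)%N -> ff R n = 0) /\ Ccount S a = ff R a.
Proof.
move=> ha [hm0 [hcm hc]] [N hQ] hS HA.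
set g := gq (Ccount Q).
have E : forall n, (0 < n)%N ->
    g n - \sum_(1 <= k < n.+1) Ccount R k * g (n - k)%N = - Ccount S n.
  by move=> n hn; exact: arrowE.
have hSn : forall n, (0 < n)%N -> n != a -> Ccount S n = 0.
  move=> n h1 h2; have [//|H] := eqVneq (Ccount S n) 0.
  by have := (hS n h1).1 H; move/eqP: h2.
have [d [gd gd0]] : exists d, g d != 0 /\ forall n, (d < n)%N -> g n = 0.
  apply: (@exists_last _ N) => [|n hn]; first by [].
  rewrite /g /gq; have -> : (n == 0)%N = false by lia.
  exact: hQ.
have hdm : (d + m)%N = a.
  have := E (d + m)%N ltac:(lia).
  rewrite (@sum_single _ _ m); first last.
  - move=> k hk hkm; have [hlt|hge] := ltnP k m.
      by rewrite gd0 ?mulr0 //; lia.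
    by rewrite hc ?mul0r //; lia.
  - lia.
  rewrite gd0; last by lia.
  rewrite add0r => /oppr_inj heq.
  apply/(hS _ _).1; first by lia.
  by rewrite -heq addnK mulf_neq0.
have agree : forall n, (n < a)%N -> g n = ff R n.
  elim/ltn_ind => n IH hn.
  case: n IH hn => [|n] IH hn; first by [].
  have := E n.+1 isT.
  rewrite hSn //; last by rewrite neq_ltn hn.
  rewrite oppr0 => /eqP; rewrite subr_eq0 => /eqP ->.
  rewrite F_rec //; apply: eq_big_nat => k hk; rewrite IH //; lia.
split; first by lia.
split.
  move=> n hn; rewrite -agree; last by lia.
  apply: gd0; lia.
have := E a ha.
rewrite gd0; last by lia.
rewrite sub0r => /oppr_inj <-.
rewrite F_rec //; apply: eq_big_nat => k hk; rewrite agree //; lia.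
Qed.

Definition mkrod (h : nat -> int) : rodset :=
  RodSet (fun n => if (0 <= h n) then `|h n|%N else 0%N)
         (fun n => if (0 <= h n) then 0%N else `|h n|%N).

Lemma Ccount_mkrod h n : Ccount (mkrod h) n = h n.
Proof.
rewrite /Ccount /=; case: (h n) => k /=; first by rewrite subr0.
by rewrite NegzE sub0r.
Qed.

Lemma backward R a m : (0 < a)%N -> is_max_len R m ->
  (forall i : nat, (1 <= i <= m - 1)%N -> Ftrains R (a%:Z - i%:Z) = 0) ->
  Ftrains R a%:Z != 0 ->
  exists Q S : rodset, rod_finite Q /\ has_shape1 S a /\ rod_arrow R Q S.
Proof.
move=> ha [hm0 [hcm hc]] H1 H2.
have hma : (m <= a)%N.
  rewrite leqNgt; apply/negP => hlt.
  have := H1 a ltac:(lia); rewrite subrr; by move/eqP.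
have Hf : forall n, (a - m < n < a)%N -> ff R n = 0.
  move=> n hn; have := H1 (a - n)%N ltac:(lia).
  rewrite subzn; last by lia.
  by have -> : (a - (a - n) = n)%N by lia.
pose G := fun n => if (n <= a - m)%N then ff R n else 0.
have GF : forall n, (n < a)%N -> G n = ff R n.
  move=> n hn; rewrite /G; case: ifP => // /negbT hn'; rewrite Hf //; lia.
have gqG : forall n, gq G n = G n.
  by case=> [|n] //; rewrite /gq /= GF.
exists (mkrod G), (mkrod (fun n => if n == a then ff R a else 0)).
split.
  exists a => n hn; rewrite Ccount_mkrod /G; case: ifP => // h; lia.
split.
  move=> n hn; rewrite Ccount_mkrod /=; case: (eqVneq n a) => [->|hne]; split => //.
  by move=> h; move/eqP: hne.
move=> n hn.
rewrite !Ccount_union Ccount_bar Ccount_prod !Ccount_mkrod /=.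
have key : Ccount R n + \sum_(1 <= k < n) G k * Ccount R (n - k)
         = \sum_(1 <= k < n.+1) Ccount R k * G (n - k)%N.
  by rewrite -conv_split //; apply: eq_bigr => k _; rewrite gqG.
under eq_bigr do rewrite Ccount_mkrod.
rewrite addrAC key.
case: (ltnP n a) => hna.
  rewrite (eq_big_nat _ _ (F2 := fun k => Ccount R k * ff R (n - k))); last first.
    by move=> k hk; rewrite GF //; lia.
  rewrite -F_rec // GF // subrr.
  by have -> : (n == a) = false by lia.
have -> : G n = 0 by rewrite /G ifF //; lia.
rewrite subr0; case: eqP => [->|hne].
  rewrite (@sum_single _ _ m); first last.
  - move=> k hk hkm; have [hlt|hge] := ltnP k m.
      by rewrite /G ifF ?mulr0 //; lia.
    by rewrite hc ?mul0r //; lia.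
  - lia.
  rewrite F_rec // (@sum_single _ _ m); first last.
  - move=> k hk hkm; have [hlt|hge] := ltnP k m.
      by rewrite Hf ?mulr0 //; lia.
    by rewrite hc ?mul0r //; lia.
  - lia.
  by rewrite /G ifT //.
rewrite big_nat_cond big1 // => k /andP[/andP[k1 k2] _].
have [hle|hgt] := leqP k m.
  by rewrite /G ifF ?mulr0 //; lia.
by rewrite hc ?mul0r.
Qed.

Theorem mainTheorem15 (R : rodset) (a m : nat) :
  rod_finite R -> ~ rod_equiv R rod_empty -> (0 < a)%N -> is_max_len R m ->
  ((exists Q S : rodset, rod_finite Q /\ has_shape1 S a /\ rod_arrow R Q S) <->
   ((forall i : nat, (1 <= i <= m - 1)%N -> Ftrains R (a%:Z - i%:Z) = 0) /\
    Ftrains R a%:Z != 0)) /\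
  (forall Q S : rodset, rod_finite Q -> has_shape1 S a -> rod_arrow R Q S ->
     Ccount S a = Ftrains R a%:Z).
Proof.
move=> _ _ ha hm.
split; last first.
  by move=> Q S hQ hS HA; have [_ [_ ->]] := @forward _ _ _ _ _ ha hm hQ hS HA.
split; last by move=> [H1 H2]; exact: (@backward R a m ha hm H1 H2).
move=> [Q [S [hQ [hS HA]]]].
have [hma [Hf HS]] := @forward _ _ _ _ _ ha hm hQ hS HA.
have [hm0 _] := hm.
split.
  move=> i hi; rewrite subzn; last by lia.
  apply: Hf; lia.
have := (hS a ha).2 erefl; rewrite HS => h; exact: h.
Qed.
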